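(* Fix $s,b\ge1$ and let $\{a_i\}$ be the $(s,b)$-Generacci sequence, with $a_i=0$ for $i\le0$. For $n,k\ge0$ let $p_{n,k}$ be the number of $m\in[a_{(n-1)b+1},a_{nb+1})$ whose legal decomposition has exactly $k$ summands, and $q_{n,k}$ the number of $m\in[0,a_{nb+1})$ whose legal decomposition has exactly $k$ summands. Then \[p_{n,k}=\begin{cases}1 & n=k=0,\\ b & 1\le n\le s,\ k=1,\\ b\,q_{n-(s+1),k-1} & n\ge s+1,\ 1\le k\le \frac{n+s}{s+1},\\ 0&\text{otherwise.}\end{cases}\] Moreover, with $n_*=\lceil\frac{n+s}{s+1}\rceil$, the generating function $F(x,y)=\sum_{n\ge0}\sum_{k=0}^{n_*}p_{n,k}x^ny^k$ equals \[F(x,y)=1+\frac{byx}{1-x-byx^{s+1}}.\]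
   Context: Fix integers $s,b\ge1$. For an increasing sequence of positive integers $\{a_i\}_{i\ge1}$ define bins $\mathcal{B}_n=\{a_{b(n-1)+1},\dots,a_{bn}\}$ for $n\ge1$, $\mathcal{B}_j=\emptyset$ for $j\le0$. A decomposition $m=a_{\ell_1}+\dots+a_{\ell_k}$ with $a_{\ell_1}>\dots>a_{\ell_k}$ is an $(s,b)$-Generacci legal decomposition if $\{a_{\ell_i},a_{\ell_{i+1}}\}\not\subset\mathcal{B}_{j-s}\cup\dots\cup\mathcal{B}_j$ for all $i,j$. The $(s,b)$-Generacci sequence is the increasing sequence in which each $a_i$ is the smallest positive integer with no legal decomposition using $a_1,\dots,a_{i-1}$; every nonnegative integer has a unique legal decomposition ($0$ being the empty sum). *)

(* Defs.v *)
From mathcomp Require Import all_boot all_algebra.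
From mathcomp Require Import boolp.
Set Implicit Arguments. Unset Strict Implicit. Unset Printing Implicit Defensive.
Import GRing.Theory Num.Theory.

(* Sequences are a : nat -> nat; only the positive indices are meaningful. *)

(* the value v belongs to bin B_t = {a_(b(t-1)+1), ..., a_(bt)};
   for t = 0 the index range is empty (B_j = empty for j <= 0). *)
Definition in_bin (a : nat -> nat) (b : nat) (v t : nat) : Prop :=
  exists2 i, (b * (t - 1) < i <= b * t)%N & a i = v.

(* v belongs to B_(j-s) u ... u B_j  (bins of index <= 0 are empty, so
   it suffices to quantify over natural j and t). *)
Definition in_window (a : nat -> nat) (s b : nat) (v j : nat) : Prop :=
  exists t, [/\ (t <= j)%N, (j <= t + s)%N & in_bin a b v t].

Definition legal (a : nat -> nat) (s b : nat) (L : seq nat) : Prop :=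
  [/\ all (fun i => 0 < i)%N L,
      (forall i, (i.+1 < size L)%N -> a (nth 0 L i.+1) < a (nth 0 L i))%N &
      (forall i j, (i.+1 < size L)%N ->
         ~ (in_window a s b (a (nth 0 L i)) j /\
            in_window a s b (a (nth 0 L i.+1)) j))].

Definition has_legal_dec_below (a : nat -> nat) (s b bnd m : nat) : Prop :=
  exists L, [/\ legal a s b L, all (fun i => i < bnd)%N L &
                (\sum_(i <- L) a i)%N = m].

Definition is_generacci (s b : nat) (a : nat -> nat) : Prop :=
  (forall i, 0 < i -> a i < a i.+1)%N /\
  (forall i, 0 < i ->
     [/\ (0 < a i)%N, ~ has_legal_dec_below a s b i (a i) &
         forall m, (0 < m < a i)%N -> has_legal_dec_below a s b i m]).

Definition legal_dec_size (a : nat -> nat) (s b m k : nat) : Prop :=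
  exists L, [/\ legal a s b L, (\sum_(i <- L) a i)%N = m & size L = k].

Definition count_range (a : nat -> nat) (s b lo hi k : nat) : nat :=
  count (fun m => `[< legal_dec_size a s b m k >]) (iota lo (hi - lo)).

(* a_((n-1)b+1), with the convention a_i = 0 for i <= 0 (relevant for n = 0) *)
Definition lowA (a : nat -> nat) (b n : nat) : nat :=
  if n is n'.+1 then a (n' * b + 1)%N else 0%N.

Definition pnk (a : nat -> nat) (s b n k : nat) : nat :=
  count_range a s b (lowA a b n) (a (n * b + 1)%N) k.

Definition qnk (a : nat -> nat) (s b n k : nat) : nat :=
  count_range a s b 0 (a (n * b + 1)%N) k.

(* n_* = ceil((n+s)/(s+1)) *)
Definition nstar (s n : nat) : nat := ((n + s + s) %/ s.+1)%N.

Local Open Scope ring_scope.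

(* formal power series in x with coefficients in Z[y]: coefficient of x^n *)
Definition fps := nat -> {poly int}.

Definition fps_mul (f g : fps) : fps :=
  fun n => \sum_(i < n.+1) f i * g (n - i)%N.

Definition genF (a : nat -> nat) (s b : nat) : fps :=
  fun n => \sum_(0 <= k < (nstar s n).+1) (pnk a s b n k)%:R * 'X^k.

Definition fps_one : fps := fun n => (n == 0)%:R.

Definition fps_sub (f g : fps) : fps := fun n => f n - g n.

(* denominator 1 - x - b y x^(s+1) *)
Definition denomD (s b : nat) : fps :=
  fun n => (n == 0)%:R - (n == 1)%:R - (n == s.+1)%:R * (b%:R * 'X).

Definition numerN (b : nat) : fps := fun n => (n == 1)%:R * (b%:R * 'X).

(* Main.v *)
Require Import Defs.
From mathcomp Require Import all_boot all_algebra zify.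
From mathcomp Require Import boolp.
Import GRing.Theory Num.Theory.
Set Implicit Arguments. Unset Strict Implicit. Unset Printing Implicit Defensive.

Section Gen.
Variables (s b : nat) (a : nat -> nat).
Hypothesis hs : (0 < s)%N.
Hypothesis hb : (0 < b)%N.
Hypothesis ha : is_generacci s b a.

Definition bin (i : nat) : nat := (i.-1 %/ b).+1.

Lemma binP (x t : nat) : (0 < x)%N -> (b * (t - 1) < x <= b * t)%N = (t == bin x).
Proof.
move=> hx; rewrite /bin; apply/idP/eqP.
- case: t => [|t] /andP[h1 h2]; first by rewrite muln0 in h2; lia.
  congr S; apply/eqP; rewrite eqn_leq leq_divRL //; apply/andP; split; first nia.
  rewrite -ltnS ltn_divLR //; nia.
- move=> ->; have h1 := leq_trunc_div x.-1 b.
  have h2 : (x.-1 < ((x.-1 %/ b).+1) * b)%N by rewrite -ltn_divLR.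
  apply/andP; split; nia.
Qed.

Lemma bin_mono x y : (x <= y)%N -> (bin x <= bin y)%N.
Proof. by move=> h; rewrite /bin ltnS leq_div2r // -!subn1 leq_sub2r. Qed.

Lemma a_mono i j : (0 < i)%N -> (i < j)%N -> (a i < a j)%N.
Proof.
move=> hi; elim: j => // j IH; rewrite ltnS leq_eqVlt => /orP[/eqP <-|h].
- by apply: ha.1.
- apply: ltn_trans (IH h) _; apply: ha.1; lia.
Qed.

Lemma a_le i j : (0 < i)%N -> (i <= j)%N -> (a i <= a j)%N.
Proof. by move=> hi; rewrite leq_eqVlt => /orP[/eqP->//|h]; apply/ltnW/a_mono. Qed.

Lemma a_ltE i j : (0 < i)%N -> (0 < j)%N -> (a i < a j)%N = (i < j)%N.
Proof.
move=> hi hj; apply/idP/idP; last exact: a_mono.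
by case: (ltnP i j) => // h1 h2; have := a_le hj h1; lia.
Qed.

Lemma a_inj i j : (0 < i)%N -> (0 < j)%N -> a i = a j -> i = j.
Proof.
move=> hi hj e; case: (ltngtP i j) => // h.
- by have := a_mono hi h; rewrite e ltnn.
- by have := a_mono hj h; rewrite e ltnn.
Qed.

Lemma a_pos i : (0 < i)%N -> (0 < a i)%N.
Proof. by move=> hi; case: (ha.2 i hi). Qed.

Lemma in_bin_iff x t : (0 < x)%N -> in_bin a b (a x) t <-> t = bin x.
Proof.
move=> hx; split.
- case=> i hi e; have hi0 : (0 < i)%N by case/andP: hi => h1 _; exact: leq_ltn_trans (leq0n _) h1.
  by rewrite (a_inj hi0 hx e) binP // in hi; apply/eqP.
- by move=> ->; exists x => //; rewrite binP.
Qed.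

Lemma in_window_iff x j : (0 < x)%N ->
  in_window a s b (a x) j <-> (bin x <= j <= bin x + s)%N.
Proof.
move=> hx; split.
- by case=> t [h1 h2 /(in_bin_iff _ hx) e]; subst t; rewrite h1.
- by move=> /andP[h1 h2]; exists (bin x); split => //; apply/in_bin_iff.
Qed.

Lemma pair_cond x y : (0 < x)%N -> (0 < y)%N ->
  ((a y < a x)%N /\ (forall j, ~ (in_window a s b (a x) j /\ in_window a s b (a y) j)))
  <-> (bin y + s < bin x)%N.
Proof.
move=> hx hy; rewrite a_ltE //; split.
- move=> [hyx hw]; have hm := bin_mono (ltnW hyx).
  case: (ltnP (bin y + s) (bin x)) => // h; exfalso.
  apply: (hw (bin x)); rewrite !in_window_iff //; lia.
- move=> h; split.
  + case: (ltnP y x) => // h'; have := bin_mono h'; lia.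
  + move=> j; rewrite !in_window_iff //; lia.
Qed.


Fixpoint good (L : seq nat) : bool :=
  if L is x :: L' then
    [&& (0 < x)%N, (if L' is y :: _ then (bin y + s < bin x)%N else true) & good L']
  else true.

Lemma legal_nil : legal a s b [::].
Proof. by split => // i j. Qed.

Lemma legal_cons x L : legal a s b (x :: L) <->
  [/\ (0 < x)%N,
      (if L is y :: _ then (a y < a x)%N /\
          (forall j, ~ (in_window a s b (a x) j /\ in_window a s b (a y) j))
       else True) & legal a s b L].
Proof.
split.
- case=> /= /andP[hx hL] h1 h2; split => //.
  + case: L hL h1 h2 => // y L hL h1 h2; split; first exact: (h1 0%N).
    by move=> j; apply: (h2 0%N j).
  + split => // [i hi|i j hi]; first exact: (h1 i.+1).
    exact: (h2 i.+1 j).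
- case=> hx hc [hL h1 h2]; split => /=; first by rewrite hx.
  + case=> [|i] /= hi; last exact: h1.
    by case: L hc {hL h1 h2} hi => // y L [].
  + case=> [|i] j /= hi; last exact: h2.
    by case: L hc {hL h1 h2} hi => // y L [_ ].
Qed.

Lemma legal_good L : legal a s b L <-> good L.
Proof.
elim: L => [|x L IH]; first by split => // _; exact: legal_nil.
rewrite legal_cons /=; split.
- case=> hx hc hL; have hg := IH.1 hL; rewrite hx hg andbT /=.
  case: L hc hg {IH hL} => // y L hc /andP[hy _].
  exact/(pair_cond hx hy).
- case/and3P=> hx hc hg; split => //; last exact/IH.
  case: L hc hg {IH} => // y L hc /andP[hy _].
  exact/(pair_cond hx hy).
Qed.

Definition cc (i : nat) : nat := ((bin i - s.+1) * b + 1)%N.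
Definition sumA (L : seq nat) : nat := (\sum_(i <- L) a i)%N.

Lemma sumA_cons x L : sumA (x :: L) = (a x + sumA L)%N.
Proof. by rewrite /sumA big_cons. Qed.

Lemma sumA_nil : sumA [::] = 0%N.
Proof. by rewrite /sumA big_nil. Qed.

Lemma bin_le y n : (0 < y)%N -> (bin y <= n)%N = (y <= n * b)%N.
Proof.
move=> hy; rewrite /bin ltn_divLR //; lia.
Qed.

Lemma cc_pos x : (0 < cc x)%N.
Proof. by rewrite /cc addn1. Qed.

Lemma cc_le x : (0 < x)%N -> (cc x <= x)%N.
Proof.
move=> hx; rewrite /cc /bin.
have h1 := leq_trunc_div x.-1 b.
move: h1; set q := x.-1 %/ b => h1.
have h2 : (q.+1 - s.+1 <= q)%N by lia.
have := leq_mul h2 (leqnn b); move: h1; set u := (q * b)%N; set v := ((q.+1 - s.+1) * b)%N.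
lia.
Qed.

Lemma head_cond x y : (0 < y)%N -> (bin y + s < bin x)%N = (y < cc x)%N.
Proof.
move=> hy; rewrite /cc addn1 ltnS -bin_le // /bin.
move: (x.-1 %/ b) (y.-1 %/ b) => u v; lia.
Qed.

Lemma good_lt x L : good (x :: L) -> all (fun y => y < x)%N L.
Proof.
elim: L x => // y L IH x /= /and3P[hx hyx hg].
have hyx' : (y < x)%N.
  case: (ltnP y x) => // h; have := bin_mono h; lia.
rewrite hyx' /=; apply/allP => z hz; exact: ltn_trans (allP (IH y hg) z hz) hyx'.
Qed.

Lemma good_pos L : good L -> all (fun y => 0 < y)%N L.
Proof. by elim: L => //= x L IH /and3P[-> _ /IH]. Qed.

Lemma good_consE x L : good (x :: L) = [&& (0 < x)%N, all (fun y => y < cc x)%N L & good L].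
Proof.
apply/idP/idP.
- move=> h; have := good_lt h; move: h => /= /and3P[hx hc hg] hlt.
  rewrite hx hg andbT /=; case: L hc hg hlt => // y L hc hg hlt.
  have hy : (0 < y)%N by case/andP: hg.
  rewrite /= -head_cond // hc /=.
  have hyL := good_lt hg; apply/allP => z hz.
  have hz0 : (0 < z)%N by apply: (allP (good_pos hg)); rewrite inE hz orbT.
  rewrite -head_cond //; have := bin_mono (ltnW (allP hyL z hz)); lia.
- case/and3P=> hx hc hg; rewrite /= hx hg andbT.
  case: L hc hg => // y L /andP[hy _] /andP[hy0 _]; rewrite head_cond //.
Qed.

Definition QE (i : nat) := forall m, (m < a i)%N ->
  exists L, [/\ good L, all (fun y => y < i)%N L & sumA L = m].
Definition QB (i : nat) := forall L, good L -> all (fun y => y < i)%N L -> (sumA L < a i)%N.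

Lemma legal_below_good i m : has_legal_dec_below a s b i m <->
  exists L, [/\ good L, all (fun y => y < i)%N L & sumA L = m].
Proof.
split; case=> L [h1 h2 h3]; exists L; split => //; exact/legal_good.
Qed.

Lemma a1 : a 1 = 1%N.
Proof.
case: (ha.2 1%N isT) => hpos _ hall.
case: (ltnP 1 (a 1)) => h; last lia.
have := hall 1%N; rewrite h => /(_ isT) /legal_below_good [[|x L] [hg hall' hs']].
- by rewrite sumA_nil in hs'.
- by move: hg hall' => /= /andP[hx _] /andP[hx1 _]; lia.
Qed.

Lemma Q1 : QE 1 /\ QB 1.
Proof.
split.
- move=> m; rewrite a1 ltnS leqn0 => /eqP ->; exists [::]; split => //.
  by rewrite sumA_nil.
- case=> [|x L] hg hall; first by rewrite sumA_nil a1.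
  by move: hg hall => /= /andP[hx _] /andP[hx1 _]; lia.
Qed.

Lemma Qstep i : (0 < i)%N -> QE i -> QB i -> QE (cc i) -> QB (cc i) ->
  a i.+1 = (a i + a (cc i))%N /\ QE i.+1 /\ QB i.+1.
Proof.
move=> hi E B Ec Bc.
have E' : forall m, (m < a i + a (cc i))%N ->
    exists L, [/\ good L, all (fun y => y < i.+1)%N L & sumA L = m].
  move=> m hm; case: (ltnP m (a i)) => h.
  - case: (E m h) => L [h1 h2 h3]; exists L; split => //.
    by apply: sub_all h2 => y /ltnW; rewrite ltnS.
  - have : (m - a i < a (cc i))%N by lia.
    case/Ec => L [h1 h2 h3]; exists (i :: L); split.
    + by rewrite good_consE hi h2 h1.
    + rewrite /= ltnSn /=; apply: sub_all h2 => y hy.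
      by have := cc_le hi; lia.
    + by rewrite sumA_cons h3; lia.
have B' : forall L, good L -> all (fun y => y < i.+1)%N L -> (sumA L < a i + a (cc i))%N.
  case=> [|x L] hg hall.
  - by rewrite sumA_nil; have := a_pos hi; lia.
  - move: (hall) => /= /andP[hxi _].
    case: (ltnP x i) => hxi'.
    + have : all (fun y => y < i)%N (x :: L).
        rewrite /= hxi' /=; apply: sub_all (good_lt hg) => y hy; lia.
      by move/(B _ hg); lia.
    + have ex : x = i by lia.
      subst x; move: hg; rewrite good_consE => /and3P[_ hc hg].
      by rewrite sumA_cons; have := Bc _ hg hc; lia.
case: (ha.2 i.+1 isT) => hpos hnot hall.
have eq : a i.+1 = (a i + a (cc i))%N.
  case: (ltngtP (a i.+1) (a i + a (cc i))) => // h.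
  - by exfalso; apply: hnot; apply/legal_below_good; apply: E'.
  - have hM : (0 < a i + a (cc i) < a i.+1)%N by rewrite h andbT; have := a_pos hi; lia.
    case/legal_below_good: (hall _ hM) => L [h1 h2 h3].
    by have := B' L h1 h2; rewrite h3 ltnn.
split => //; split; rewrite /QE /QB eq //.
Qed.

Lemma Qall i : (0 < i)%N -> QE i /\ QB i.
Proof.
move=> hi; suff H: forall n j, (0 < j <= n)%N -> QE j /\ QB j by apply: (H i i); rewrite hi leqnn.
elim=> [|n IH] j hj; first lia.
case: (ltnP j n.+1) => hjn; first by apply: IH; lia.
have ej : j = n.+1 by lia.
subst j; case: n IH {hi hj hjn} => [|n] IH; first exact: Q1.
have [E B] := IH n.+1 (leqnn _).
have hc := cc_le (ltn0Sn n).
have [Ec Bc] := IH (cc n.+1) (andb_true_intro (conj (cc_pos _) hc)).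
by case: (Qstep (ltn0Sn n) E B Ec Bc).
Qed.

Lemma a_rec i : (0 < i)%N -> a i.+1 = (a i + a (cc i))%N.
Proof.
move=> hi; have [E B] := Qall hi; have [Ec Bc] := Qall (cc_pos i).
by case: (Qstep hi E B Ec Bc).
Qed.

Lemma lt_next x L : good (x :: L) -> (sumA (x :: L) < a x.+1)%N.
Proof.
rewrite good_consE => /and3P[hx hc hg].
rewrite a_rec // sumA_cons ltn_add2l; exact: (Qall (cc_pos x)).2.
Qed.

Lemma mem_sum_le x L : x \in L -> (a x <= sumA L)%N.
Proof.
elim: L => // y L IH; rewrite inE sumA_cons => /orP[/eqP ->|/IH]; lia.
Qed.

Lemma uniq_dec L1 L2 : good L1 -> good L2 -> sumA L1 = sumA L2 -> L1 = L2.
Proof.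
elim: L1 L2 => [|x L1 IH] [|y L2] //.
- by move=> _ /andP[hy _]; rewrite sumA_nil sumA_cons; have := a_pos hy; lia.
- by move=> /andP[hx _] _; rewrite sumA_nil sumA_cons; have := a_pos hx; lia.
move=> h1 h2 e.
have hx : (0 < x)%N by case/andP: h1.
have hy : (0 < y)%N by case/andP: h2.
case: (ltngtP x y) => hxy.
- have := lt_next h1; have := a_le (ltn0Sn x) hxy; rewrite e sumA_cons; lia.
- have := lt_next h2; have := a_le (ltn0Sn y) hxy; rewrite -e sumA_cons; lia.
- subst y; congr cons; apply: IH.
  + by move: h1; rewrite good_consE => /and3P[].
  + by move: h2; rewrite good_consE => /and3P[].
  + by move: e; rewrite !sumA_cons => /eqP; rewrite eqn_add2l => /eqP.
Qed.

Lemma all_lt_of_sum L c : good L -> (0 < c)%N -> (sumA L < a c)%N -> all (fun y => y < c)%N L.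
Proof.
move=> hg hc hs'; apply/allP => x hx.
have hx0 : (0 < x)%N := allP (good_pos hg) x hx.
rewrite -(a_ltE hx0 hc); have := mem_sum_le hx; lia.
Qed.

Lemma ldsE m k : legal_dec_size a s b m k <-> exists L, [/\ good L, sumA L = m & size L = k].
Proof. by split; case=> L [h1 h2 h3]; exists L; split => //; apply/legal_good. Qed.

Lemma lds0 k : legal_dec_size a s b 0 k <-> k = 0%N.
Proof.
rewrite ldsE; split.
- case=> [[|x L] [hg hs' hk]]; first by rewrite -hk.
  by move: hg hs' => /andP[hx _]; rewrite sumA_cons; have := a_pos hx; lia.
- by move=> ->; exists [::]; rewrite sumA_nil.
Qed.

Lemma ldsS i m k : (0 < i)%N -> (m < a (cc i))%N ->
  legal_dec_size a s b (a i + m) k <-> exists2 k', k = k'.+1 & legal_dec_size a s b m k'.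
Proof.
move=> hi hm; rewrite ldsE; split.
- case=> L [hg hs' hk].
  case: ((Qall (cc_pos i)).1 m hm) => L0 [h1 h2 h3].
  have hg0 : good (i :: L0) by rewrite good_consE hi h2 h1.
  have eL : L = i :: L0 by apply: uniq_dec => //; rewrite hs' sumA_cons h3.
  exists (size L0); first by rewrite -hk eL.
  by apply/ldsE; exists L0.
- case=> k' -> /ldsE [L [hg hs' hk]]; exists (i :: L); split.
  + by rewrite good_consE hi hg andbT; apply: all_lt_of_sum => //; [exact: cc_pos | rewrite hs'].
  + by rewrite sumA_cons hs'.
  + by rewrite /= hk.
Qed.

Notation CR := (count_range a s b).

Lemma cr_split lo mid hi k : (lo <= mid <= hi)%N -> CR lo hi k = (CR lo mid k + CR mid hi k)%N.
Proof.
case/andP=> h1 h2; rewrite /count_range.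
have -> : (hi - lo = (mid - lo) + (hi - mid))%N by lia.
by rewrite iotaD count_cat subnKC.
Qed.

Lemma cr_nil x k : CR x x k = 0%N.
Proof. by rewrite /count_range subnn. Qed.

Lemma cr_shift i k : (0 < i)%N ->
  CR (a i) (a i.+1) k = (if k is k'.+1 then CR 0 (a (cc i)) k' else 0)%N.
Proof.
move=> hi; rewrite /count_range a_rec // addKn subn0.
rewrite -[X in iota X _]addn0 iotaDl count_map.
case: k => [|k].
- rewrite (@eq_in_count _ _ pred0) ?count_pred0 // => m.
  rewrite mem_iota add0n => /andP[_ hm] /=; apply: asboolF => /(ldsS _ hi hm) [k' e _] //.
- apply: eq_in_count => m; rewrite mem_iota add0n => /andP[_ hm] /=.
  apply/idP/idP => /asboolP h; apply/asboolP.
  + by case/(ldsS _ hi hm): h => k' [->].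
  + by apply/(ldsS _ hi hm); exists k.
Qed.

Lemma div_blk n' j : (j < b)%N -> ((n' * b + j) %/ b = n')%N.
Proof. by move=> hj; rewrite divnMDl // divn_small // addn0. Qed.

Lemma cc_blk n' j : (j < b)%N -> cc (n' * b + 1 + j) = ((n' - s) * b + 1)%N.
Proof.
move=> hj; rewrite /cc /bin.
have -> : ((n' * b + 1 + j).-1 = n' * b + j)%N by rewrite -addnA add1n addnS.
by rewrite div_blk // subSS.
Qed.

Lemma cr_blk n' j k : (j <= b)%N ->
  CR (a (n' * b + 1)) (a (n' * b + 1 + j)) k =
  (j * (if k is k'.+1 then CR 0 (a ((n' - s) * b + 1)) k' else 0))%N.
Proof.
elim: j => [|j IH] hj; first by rewrite addn0 cr_nil.
rewrite (cr_split (mid := a (n' * b + 1 + j))); last first.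
  by apply/andP; split; apply: a_le; lia.
rewrite IH; last lia.
rewrite (addnS (n' * b + 1) j) cr_shift; last lia.
rewrite cc_blk; last lia.
by rewrite mulSn addnC.
Qed.

Lemma pnk0 k : pnk a s b 0 k = (k == 0%N).
Proof.
rewrite /pnk /count_range /= mul0n add0n a1 subn0 /=.
case: k => [|k] /=.
- by rewrite asboolT //; apply/lds0.
- by rewrite addn0 asboolF // => /lds0.
Qed.

Lemma pnkS n' k : pnk a s b n'.+1 k =
  (b * (if k is k'.+1 then qnk a s b (n' - s) k' else 0))%N.
Proof.
by rewrite /pnk /= mulSnr -addnA (addnC b) addnA cr_blk.
Qed.

Lemma qnk0 k : qnk a s b 0 k = pnk a s b 0 k.
Proof. by []. Qed.

Lemma qnkS m k : qnk a s b m.+1 k = (qnk a s b m k + pnk a s b m.+1 k)%N.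
Proof.
rewrite /qnk /pnk /= (cr_split (mid := a (m * b + 1))) //.
apply/andP; split => //; apply: a_le; first lia.
rewrite mulSnr; lia.
Qed.

Lemma good_bin x L : good (x :: L) -> (1 + size L * s.+1 <= bin x)%N.
Proof.
elim: L x => [|y L IH] x /=; first by rewrite mul0n addn0 /bin.
case/and3P=> hx hyx hg; have := IH y hg; rewrite mulSn.
move: (size L * s.+1)%N => u; lia.
Qed.

Lemma qnk_van n' k' : (n' + s < k' * s.+1)%N -> qnk a s b n' k' = 0%N.
Proof.
move=> hk; rewrite /qnk /count_range subn0.
rewrite (@eq_in_count _ _ pred0) ?count_pred0 // => m.
rewrite mem_iota add0n => /andP[_ hm] /=; apply: asboolF => /ldsE [L [hg hsL hsz]].
have hc1 : (0 < n' * b + 1)%N by rewrite addn1.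
have hall := all_lt_of_sum hg hc1 (eq_ind_r (fun z => (z < _)%N) hm hsL).
case: L hg hsL hsz hall => [|x L] hg hsL hsz hall.
- by rewrite -hsz mul0n in hk.
- have hbx := good_bin hg.
  have hx : (0 < x)%N by case/andP: hg.
  have : (bin x <= n')%N by rewrite bin_le //; move: hall => /= /andP[+ _]; rewrite addn1 ltnS.
  move: hk hbx; rewrite -hsz /= mulSn; move: (size L * s.+1)%N (bin x) => u v; lia.
Qed.

Lemma pformula n k : pnk a s b n k =
       (if (n == 0) && (k == 0) then 1
        else if (1 <= n <= s) && (k == 1) then b
        else if [&& s.+1 <= n, 1 <= k & k * s.+1 <= n + s]
             then b * qnk a s b (n - s.+1) (k - 1)
        else 0)%N.
Proof.
case: n => [|n']; [by rewrite pnk0; case: k|].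
rewrite pnkS /=; case: k => [|k']; [by rewrite muln0 !andbF|].
rewrite subSS subn1 /=.
case: (ltnP n' s) => hn.
- have -> : (n' - s = 0)%N by lia.
  rewrite qnk0 pnk0 /=; case: k' => [|k'] /=; first by rewrite muln1.
  by rewrite muln0; case: ifP.
  rewrite /= ltnS hn /=.
  case: ifP => // hk; rewrite qnk_van ?muln0 //.
  move: hk; rewrite mulSn; move: (k' * s.+1)%N => u /negbT; lia.
Qed.

Lemma pnk_van n k : (nstar s n < k)%N -> pnk a s b n k = 0%N.
Proof.
rewrite pformula /nstar => hk.
case: ifP => [/andP[_ /eqP hk0]|_]; first by rewrite hk0 in hk.
case: ifP => [/andP[_ /eqP hk1]|_].
  by subst k; move: hk; rewrite ltnNge leq_divRL // mul1n; lia.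
case: ifP => // /and3P[_ _ h]; exfalso; move: hk; rewrite ltnNge leq_divRL //.
by rewrite (leq_trans h) // leq_addr.
Qed.

Lemma sum_delta (R : pzRingType) N j (F : nat -> R) :
  (\sum_(i < N) (((i : nat) == j)%:R * F i) = (j < N)%:R * F j)%R.
Proof.
elim: N => [|N IH]; first by rewrite big_ord0 ltn0 mul0r.
rewrite big_ord_recr /= IH ltnS.
case: (ltngtP j N) => [h|h|->].
- by rewrite mul0r addr0.
- by rewrite !mul0r addr0.
- by rewrite mul0r add0r.
Qed.

Lemma coef_genF n k : ((genF a s b n)`_k = (pnk a s b n k)%:R)%R.
Proof.
rewrite /genF coef_sum big_mkord.
rewrite (eq_bigr (fun i : 'I_(nstar s n).+1 => ((i : nat) == k)%:R * (pnk a s b n i)%:R))%R; last first.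
  by move=> i _; rewrite mulr_natl coefMn coefXn eq_sym mulr_natr.
rewrite (sum_delta _ _ (fun i => (pnk a s b n i)%:R%R)); case: ltnP => h; first by rewrite mul1r.
by rewrite mul0r pnk_van.
Qed.

Definition pp n k := if n is 0 then 0%N else pnk a s b n k.

Lemma coef_Gp n k : ((fps_sub (genF a s b) fps_one n)`_k = (pp n k)%:R)%R.
Proof.
rewrite /fps_sub coefB coef_genF /fps_one coefMn coef1.
case: n => [|n] /=; last by rewrite mulr0n subr0.
by rewrite pnk0 mulr1n subrr.
Qed.

Lemma pp_rec n k : pp n k =
  (pp n.-1 k * (0 < n) + (if k is k'.+1 then pp (n - s.+1) k' else 0) * b * (s.+1 <= n)
   + (n == 1) * b * (k == 1))%N.
Proof.
case: n => [|[|n]]; first by rewrite /= !muln0.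
- rewrite /= pnkS /=.
  have -> : (0 - s = 0)%N by lia.
  have -> : (s < 1)%N = false by lia.
  case: k => [|[|k]]; rewrite ?qnk0 ?pnk0 /= ?eqSS /=; lia.
- rewrite /= !pnkS muln1 /= subSS.
  case: (leqP s n) => hsn.
  + have -> : (n.+1 - s = (n - s).+1)%N by lia.
    have -> : (s < n.+2)%N by lia.
    case: k => [|k] /=; first lia.
    rewrite qnkS; nia.
  + have -> : (n.+1 - s = 0)%N by lia.
    have -> : (n - s = 0)%N by lia.
    case: k => [|k] /=; lia.
Qed.

Lemma natmulnE (x m : nat) : ((x%:R : int) *+ m = (x * m)%:R)%R.
Proof. by rewrite natrM mulr_natr. Qed.

Lemma gf_identity : fps_mul (denomD s b) (fps_sub (genF a s b) fps_one) = numerN b.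
Proof.
apply: funext => n; rewrite /fps_mul /denomD.
set G := fps_sub (genF a s b) fps_one.
rewrite (eq_bigr (fun i : 'I_n.+1 => ((i:nat) == 0%N)%:R * G (n - i)%N
   - ((i:nat) == 1%N)%:R * G (n - i)%N
   - ((i:nat) == s.+1)%:R * ((b%:R * 'X) * G (n - i)%N)))%R; last first.
  by move=> i _; rewrite !mulrBl !mulrA.
rewrite !sumrB (sum_delta _ _ (fun i => G (n - i)%N)) (sum_delta _ _ (fun i => G (n - i)%N)).
rewrite (sum_delta _ _ (fun i => ((b%:R * 'X) * G (n - i)%N)%R)).
apply/polyP => k.
rewrite /numerN !coefB -!mulrA !mulr_natl !coefMn coefXM coefX /G !coef_Gp subn0.
have e := pp_rec n k; rewrite !ltnS leq0n subn1.
case: k e => [|k] e.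
- rewrite ?mul0rn !natmulnE e; lia.
- have -> : (k.+1 == 0%N) = false by [].
  rewrite /= !natmulnE e; lia.
Qed.
End Gen.

Unset Implicit Arguments.

Theorem proposition2p13 (s b : nat) (a : nat -> nat) :
  (1 <= s)%N -> (1 <= b)%N -> is_generacci s b a ->
  (forall n k : nat,
     pnk a s b n k =
       (if (n == 0) && (k == 0) then 1
        else if (1 <= n <= s) && (k == 1) then b
        else if [&& s.+1 <= n, 1 <= k & k * s.+1 <= n + s]
             then b * qnk a s b (n - s.+1) (k - 1)
        else 0)%N) /\
  (* F = 1 + b y x / (1 - x - b y x^(s+1)), i.e. (1 - x - b y x^(s+1)) (F - 1) = b y x *)
  fps_mul (denomD s b) (fps_sub (genF a s b) fps_one) = numerN b.
Proof.
move=> hs hb ha; split.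
- by move=> n k; apply: pformula.
- exact: gf_identity.
Qed.
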